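(* Consider the APT–DIFT game described in the context and the value-iteration sequence $V^{(0)},V^{(1)},V^{(2)},\dots$ of functions $\mathbf S\to\mathbb R$ defined there. Then for every $k\ge0$ and every $s\in\mathbf S$, $V^{(k+1)}(s)\ge V^{(k)}(s)$.
   Context: Let $\mathcal G=(V_{\mathcal G},E_{\mathcal G})$ be a finite directed graph with $V_{\mathcal G}=\{v_1,\dots,v_N\}$, let $\lambda\subset V_{\mathcal G}$ be a set of entry points and $\mathcal D=\{v_1,\dots,v_q\}\subset V_{\mathcal G}$ a destination set. Let $FN,FP:V_{\mathcal G}\to(0,1)$ and $\beta>0$. The APT–DIFT game has state space $\mathbf S=\{v_0,v_1,\dots,v_N,\phi,\tau_A,\tau_B\}$; the states in $\{\phi,\tau_A,\tau_B\}\cup\mathcal D$ are absorbing with empty action sets. At $v_0$: $\mathcal A_A(v_0)=\lambda$, $\mathcal A_D(v_0)=\{0\}$. At a non-absorbing $s=v_i\in V_{\mathcal G}$: $\mathcal A_A(s)=\{\phi\}\cup\{v_j:(v_i,v_j)\in E_{\mathcal G}\}$, $\mathcal A_D(s)=\{0\}\cup\{v_j:(v_i,v_j)\in E_{\mathcal G}\}$. Transition probabilities $P(s,a,d,s')$ for $a\in\mathcal A_A(s)$, $d\in\mathcal A_D(s)$: if $d=0$, $s'=a$ with probability $1$; if $d=a$, $s'=a$ with probability $FN(d)$ and $s'=\tau_A$ with probability $1-FN(d)$; if $d\ne0$ and $d\neq a$, $s'=\tau_B$ with probability $FP(d)$ and $s'=a$ with probability $1-FP(d)$. Value iteration (Algorithm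 1): $V^{(0)}(s)=0$ for all $s\in\mathbf S$; $V^{(1)}(s)=\beta$ for $s\in\{\tau_A,\phi\}$ and $V^{(1)}(s)=0$ for all other $s$; and for $k\ge1$, $V^{(k+1)}(s)=\beta$ if $s\in\{\phi,\tau_A\}$, $V^{(k+1)}(s)=0$ if $s\in\{\tau_B\}\cup\mathcal D$, and otherwise $$V^{(k+1)}(s)=\max_{p\in\Delta(\mathcal A_D(s))}\ \min_{a\in\mathcal A_A(s)}\ \sum_{s'\in\mathbf S}\sum_{d\in\mathcal A_D(s)}p(d)\,P(s,a,d,s')\,V^{(k)}(s'),$$ where $\Delta(\mathcal A_D(s))$ is the set of probability distributions on $\mathcal A_D(s)$. *)

(* Defs.v *)
From HB Require Import structures.
From mathcomp Require Import all_boot all_order all_algebra.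
From mathcomp Require Import boolp classical_sets reals.
Set Implicit Arguments. Unset Strict Implicit. Unset Printing Implicit Defensive.
Import Order.TTheory GRing.Theory Num.Theory.
Local Open Scope ring_scope.

(* States: v_0, the graph vertices v_1..v_N (encoded by i : 'I_N, v_{i+1}),
   phi, tau_A, tau_B. *)
Inductive state (N : nat) := Sv0 | Sv of 'I_N | Sphi | StauA | StauB.
Arguments Sv0 {N}. Arguments Sphi {N}. Arguments StauA {N}. Arguments StauB {N}.

Section StateFin.
Variable N : nat.
Definition state_enc (s : state N) : 'I_N + 'I_4 :=
  match s with
  | Sv0 => inr (@Ordinal 4 0 isT)
  | Sv i => inl i
  | Sphi => inr (@Ordinal 4 1 isT)
  | StauA => inr (@Ordinal 4 2 isT)
  | StauB => inr (@Ordinal 4 3 isT)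
  end.
Definition state_dec (x : 'I_N + 'I_4) : state N :=
  match x with
  | inl i => Sv i
  | inr k => match val k with 0 => Sv0 | 1 => Sphi | 2 => StauA | _ => StauB end
  end.
Lemma state_encK : cancel state_enc state_dec. Proof. by case. Qed.
HB.instance Definition _ := Finite.copy (state N) (can_type state_encK).
End StateFin.

Section Game.
Variables (R : realType) (N : nat) (E : rel 'I_N) (lam : {set 'I_N}) (q : nat)
          (FN FP : 'I_N -> R) (beta : R).

Definition dest : {set 'I_N} := [set i : 'I_N | (i < q)%N].

(* attacker action sets (actions are target states) *)
Definition AA (s : state N) : {set state N} :=
  match s with
  | Sv0 => [set Sv i | i in lam]
  | Sv i => if i \in dest then finset.set0
            else Sphi |: [set Sv j | j in [set j | E i j]]
  | _ => finset.set0
  end.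

(* defender action sets: None encodes the action 0, Some j the vertex j *)
Definition AD (s : state N) : {set option 'I_N} :=
  match s with
  | Sv0 => [set None]
  | Sv i => if i \in dest then finset.set0
            else None |: [set Some j | j in [set j | E i j]]
  | _ => finset.set0
  end.

Definition trans (s : state N) (a : state N) (d : option 'I_N) (s' : state N) : R :=
  match d with
  | None => (s' == a)%:R
  | Some j => if a == Sv j
              then FN j * (s' == a)%:R + (1 - FN j) * (s' == StauA)%:R
              else FP j * (s' == StauB)%:R + (1 - FP j) * (s' == a)%:R
  end.

Definition distr_on (A : {set option 'I_N}) (p : option 'I_N -> R) : Prop :=
  (forall d, 0 <= p d) /\ (forall d, d \notin A -> p d = 0) /\
  \sum_(d in A) p d = 1.

Definition payoff (V : state N -> R) (s : state N) (p : option 'I_N -> R)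
    (a : state N) : R :=
  \sum_(s' : state N) \sum_(d in AD s) p d * trans s a d s' * V s'.

(* one Bellman step for k >= 1: max over p in Delta(AD s) of min over a in AA s
   (the max is the supremum, which is attained) *)
Definition vstep (V : state N -> R) (s : state N) : R :=
  match s with
  | Sphi | StauA => beta
  | StauB => 0
  | Sv i => if i \in dest then 0 else
      sup [set x | exists2 p, distr_on (AD s) p &
             x = inf [set y | exists2 a, a \in AA s & y = payoff V s p a]%classic]%classic
  | Sv0 =>
      sup [set x | exists2 p, distr_on (AD s) p &
             x = inf [set y | exists2 a, a \in AA s & y = payoff V s p a]%classic]%classic
  end.

Definition V1 (s : state N) : R :=
  match s with Sphi | StauA => beta | _ => 0 end.

Fixpoint VI (k : nat) : state N -> R :=
  match k with
  | 0 => fun _ => 0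
  | k'.+1 => match k' with
             | 0 => V1
             | _ => vstep (VI k')
             end
  end.
End Game.

(* Main.v *)
Require Import Defs.
From HB Require Import structures.
From mathcomp Require Import all_boot all_order all_algebra.
From mathcomp Require Import boolp classical_sets reals.
From mathcomp Require Import lra.
Import Order.TTheory GRing.Theory Num.Theory.
Local Open Scope ring_scope.

Lemma trans_bnd (R : realType) (N : nat) (FN FP : 'I_N -> R)
  (hFN : forall v, 0 < FN v < 1) (hFP : forall v, 0 < FP v < 1) s a d s' :
  0 <= trans FN FP s a d s' <= 1.
Proof.
have aux (c : R) (x y : bool) : 0 < c < 1 -> 0 <= c * x%:R + (1 - c) * y%:R <= 1.
  move=> /andP[c0 c1]; case: x; case: y => /=; rewrite ?mulr1 ?mulr0 ?addr0 ?add0r;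
  apply/andP; split; lra.
rewrite /trans; case: d => [j|]; last by case: eqP => _; apply/andP; split; rewrite ?ler0n ?lern1 ?ler01 ?lexx.
by case: (a == Sv j); apply: aux.
Qed.

Arguments trans_bnd {R N FN FP}.

Lemma distr_le1 (R : realType) (N : nat) (A : {set option 'I_N}) (p : option 'I_N -> R) d :
  distr_on A p -> 0 <= p d <= 1.
Proof.
move=> [h0 [hout hs]]; rewrite h0 /=.
case: (boolP (d \in A)) => hd; last by rewrite hout.
by rewrite -hs (bigD1 d) //= lerDl sumr_ge0.
Qed.

Arguments distr_le1 {R N A p}.

Definition bnd {R : realType} {N : nat} (E : rel 'I_N) (q : nat) (V : state N -> R) s :=
  \sum_(s' : state N) \sum_(d in AD E q s) `|V s'|.

Lemma payoff_bnd (R : realType) (N : nat) (E : rel 'I_N) (q : nat) (FN FP : 'I_N -> R)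
  (hFN : forall v, 0 < FN v < 1) (hFP : forall v, 0 < FP v < 1) V s p a :
  distr_on (AD E q s) p -> `|payoff E q FN FP V s p a| <= bnd E q V s.
Proof.
move=> hp; rewrite /payoff /bnd.
apply: le_trans (ler_norm_sum _ _ _) _; apply: ler_sum => s' _.
apply: le_trans (ler_norm_sum _ _ _) _; apply: ler_sum => d _.
have /andP[p0 p1] := distr_le1 d hp.
have /andP[t0 t1] := trans_bnd hFN hFP s a d s'.
rewrite !normrM (ger0_norm p0) (ger0_norm t0).
rewrite -[leRHS]mul1r ler_wpM2r //.
by rewrite -[1]mul1r ler_pM.
Qed.

Lemma payoff_mono (R : realType) (N : nat) (E : rel 'I_N) (q : nat) (FN FP : 'I_N -> R)
  (hFN : forall v, 0 < FN v < 1) (hFP : forall v, 0 < FP v < 1) V W s p a :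
  distr_on (AD E q s) p -> (forall s, V s <= W s) ->
  payoff E q FN FP V s p a <= payoff E q FN FP W s p a.
Proof.
move=> hp hVW; rewrite /payoff; apply: ler_sum => s' _; apply: ler_sum => d _.
have /andP[p0 p1] := distr_le1 d hp.
have /andP[t0 t1] := trans_bnd hFN hFP s a d s'.
by rewrite ler_wpM2l ?mulr_ge0.
Qed.

Lemma payoff_ge0 (R : realType) (N : nat) (E : rel 'I_N) (q : nat) (FN FP : 'I_N -> R)
  (hFN : forall v, 0 < FN v < 1) (hFP : forall v, 0 < FP v < 1) V s p a :
  distr_on (AD E q s) p -> (forall s, 0 <= V s) ->
  0 <= payoff E q FN FP V s p a.
Proof.
move=> hp hV; rewrite /payoff; apply: sumr_ge0 => s' _; apply: sumr_ge0 => d _.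
have /andP[p0 p1] := distr_le1 d hp.
have /andP[t0 t1] := trans_bnd hFN hFP s a d s'.
by rewrite !mulr_ge0.
Qed.

Arguments payoff_bnd {R N E q FN FP}.
Arguments payoff_mono {R N E q FN FP}.
Arguments payoff_ge0 {R N E q FN FP}.

Section Main.
Context (R : realType) (N : nat) (E : rel 'I_N) (lam : {set 'I_N})
  (q : nat) (FN FP : 'I_N -> R) (beta : R)
  (hFN : forall v, 0 < FN v < 1) (hFP : forall v, 0 < FP v < 1).

Let I (V : state N -> R) s p := [set y | exists2 a, a \in AA E lam q s & y = payoff E q FN FP V s p a]%classic.
Let S (V : state N -> R) s := [set x | exists2 p, distr_on (AD E q s) p & x = inf (I V s p)]%classic.

Lemma I_lb V s p : distr_on (AD E q s) p -> has_lbound (I V s p).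
Proof.
move=> hp; exists (- bnd E q V s) => y [a ha ->].
by have := payoff_bnd hFN hFP V s p a hp; rewrite ler_norml => /andP[].
Qed.

Lemma inf_le_bnd V s p a0 : a0 \in AA E lam q s -> distr_on (AD E q s) p ->
  inf (I V s p) <= bnd E q V s.
Proof.
move=> ha hp; apply: le_trans (_ : payoff E q FN FP V s p a0 <= _).
  by apply: ge_inf; [exact: I_lb | exists a0].
by have := payoff_bnd hFN hFP V s p a0 hp; rewrite ler_norml => /andP[].
Qed.

Lemma S_ub V s a0 : a0 \in AA E lam q s -> has_ubound (S V s).
Proof.
move=> ha; exists (bnd E q V s) => x [p hp ->]; exact: (inf_le_bnd _ _ _ _ ha hp).
Qed.

Definition p0 : option 'I_N -> R := fun d => (d == None)%:R.

Lemma p0_distr s : None \in AD E q s -> distr_on (AD E q s) p0.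
Proof.
move=> hN; split; first by move=> d; rewrite /p0 ler0n.
split; first by move=> d hd; rewrite /p0; case: eqP => // e; rewrite e hN in hd.
rewrite (bigD1 None) //= big1 ?addr0 /p0 ?eqxx //.
by move=> d /andP[_ /negbTE ->].
Qed.

Lemma inf_mono V W s p a0 : a0 \in AA E lam q s -> distr_on (AD E q s) p ->
  (forall s, V s <= W s) -> inf (I V s p) <= inf (I W s p).
Proof.
move=> ha hp hVW; apply: lb_le_inf; first by exists (payoff E q FN FP W s p a0), a0.
move=> y [a haa ->]; apply: le_trans (payoff_mono hFN hFP _ _ _ _ a hp hVW).
by apply: ge_inf; [exact: I_lb | exists a].
Qed.

Lemma sup_mono V W s a0 : a0 \in AA E lam q s -> None \in AD E q s ->
  (forall s, V s <= W s) -> sup (S V s) <= sup (S W s).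
Proof.
move=> ha hN hVW; apply: ge_sup.
  by exists (inf (I V s p0)), p0 => //; exact: p0_distr.
move=> x [p hp ->]; apply: le_trans (inf_mono _ _ _ _ _ ha hp hVW) _.
by apply: ub_le_sup; [exact: (S_ub _ _ _ ha) | exists p].
Qed.

Lemma sup_ge0 V s a0 : a0 \in AA E lam q s -> None \in AD E q s ->
  (forall s, 0 <= V s) -> 0 <= sup (S V s).
Proof.
move=> ha hN hV; have hp := p0_distr _ hN.
apply: (@le_trans _ _ (inf (I V s p0))).
  apply: lb_le_inf; first by exists (payoff E q FN FP V s p0 a0), a0.
  by move=> y [a haa ->]; apply: payoff_ge0.
by apply: ub_le_sup; [exact: (S_ub _ _ _ ha) | exists p0].
Qed.


Lemma AA0 : lam != finset.set0 -> exists a0, a0 \in AA E lam q (@Sv0 N).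
Proof. by case/set0Pn => i hi; exists (Sv i); rewrite /AA; apply: imset_f. Qed.

Lemma vstep_mono V W : lam != finset.set0 -> (forall s, V s <= W s) ->
  forall s, vstep E lam q FN FP beta V s <= vstep E lam q FN FP beta W s.
Proof.
move=> hlam h [|i| | |] /=; rewrite ?lexx //.
  have [a0 ha0] := AA0 hlam.
  exact: (sup_mono V W _ a0 ha0 (set11 _) h).
move: (sup_mono V W (Sv i) Sphi); rewrite /S /I /AA /AD /=.
case: ifP => hi; first by rewrite lexx.
by move=> H; apply: H => //; rewrite setU11.
Qed.

Lemma vstep_ge0 V : lam != finset.set0 -> 0 <= beta -> (forall s, 0 <= V s) ->
  forall s, 0 <= vstep E lam q FN FP beta V s.
Proof.
move=> hlam hb h [|i| | |] //=; rewrite ?lexx //.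
  have [a0 ha0] := AA0 hlam.
  exact: (sup_ge0 V _ a0 ha0 (set11 _) h).
move: (sup_ge0 V (Sv i) Sphi); rewrite /S /I /AA /AD /=.
case: ifP => hi; first by rewrite lexx.
by move=> H; apply: H => //; rewrite setU11.
Qed.

End Main.

Theorem lemma1 (R : realType) (N : nat) (E : rel 'I_N) (lam : {set 'I_N})
  (q : nat) (FN FP : 'I_N -> R) (beta : R)
  (hq : (q <= N)%N) (hlam : lam != finset.set0)
  (hFN : forall v, 0 < FN v < 1) (hFP : forall v, 0 < FP v < 1)
  (hbeta : 0 < beta) :
  forall (k : nat) (s : state N),
    VI E lam q FN FP beta k s <= VI E lam q FN FP beta k.+1 s.
Proof.
have hb : 0 <= beta by exact: ltW.
have V1ge0 : forall s : state N, 0 <= V1 beta s.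
  by case=> [|i| | |] //=; rewrite ?lexx.
elim=> [|[|k] IH].
- by move=> s /=; exact: V1ge0.
- move=> s; change (V1 beta s <= vstep E lam q FN FP beta (V1 beta) s).
  case: s => [|i| | |]; try by rewrite /= lexx.
  + by apply: vstep_ge0.
  + by apply: vstep_ge0.
- move=> s; by apply: vstep_mono.
Qed.
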